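(* (i) Every $\mathcal H$-convex function $f:\mathbb R\to\mathbb R_{+\infty}$ is even and lower semicontinuous. (ii) If $C\subset\mathcal H$ is $\mathcal H$-convex and $A\subset\mathbb R^2$ satisfies $C=\{\psi_{a,b}:(a,b)\in A\}$, then $A$ is closed and convex and $A-\mathbb R^2_+\subset A$. (iii) If $A\subset\mathbb R^2$ is closed and convex, $A-\mathbb R^2_+\subset A$, and the function $\sup_{(a,b)\in A}\psi_{a,b}$ is not identically $+\infty$ on $\mathbb R$, then $C=\{\psi_{a,b}:(a,b)\in A\}$ is $\mathcal H$-convex.
   Context: $X=\mathbb R$; $\mathbb R_{+\infty}=\mathbb R\cup\{+\infty\}$. For $a,b\in\mathbb R$, $\phi_a(x)=ax^2$, $\psi_{a,b}(x)=ax^2+b$; $\mathcal L=\{\phi_a:a\in\mathbb R\}$, $\mathcal H=\{\psi_{a,b}:a,b\in\mathbb R\}$. A function $f$ is $\mathcal H$-convex if $f=\sup_{h\in H}h$ pointwise for some $H\subset\mathcal H$. A subset $C\subset\mathcal H$ is $\mathcal H$-convex if for every $h_0\in\mathcal H\setminus C$ there is $x\in\mathbb R$ with $h_0(x)>\sup_{h\in C}h(x)$. $\mathbb R^2_+=\{(a,b):a\ge0,b\ge0\}$ and $A-B=\{u-v:u\in A,v\in B\}$. *)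

(* Defs.v *)
From Stdlib Require Export Reals.
Open Scope R_scope.

Inductive ERp : Type := Fin : R -> ERp | PInf : ERp.

Definition ltRE (y : R) (v : ERp) : Prop :=
  match v with Fin r => y < r | PInf => True end.

(* v is the supremum (in R ∪ {±∞}) of the real set S, and v ∈ R ∪ {+∞} *)
Definition is_sup_ext (S : R -> Prop) (v : ERp) : Prop :=
  match v with
  | Fin r => is_lub S r
  | PInf => forall M : R, exists y, S y /\ M < y
  end.

Definition phi (a : R) : R -> R := fun x => a * x ^ 2.
Definition psi (a b : R) : R -> R := fun x => a * x ^ 2 + b.

Definition inH (h : R -> R) : Prop := exists a b, h = psi a b.

Definition H_convex_fun (f : R -> ERp) : Prop :=
  exists H : (R -> R) -> Prop,
    (forall h, H h -> inH h) /\
    forall x, is_sup_ext (fun y => exists h, H h /\ y = h x) (f x).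

(* C ⊂ ℋ is ℋ-convex: every h0 ∈ ℋ \ C exceeds sup_{h∈C} h at some point
   (h0 x > sup S  iff  some real upper bound u of S satisfies u < h0 x;
    this covers sup S = -∞ and excludes sup S = +∞) *)
Definition H_convex_set (C : (R -> R) -> Prop) : Prop :=
  forall h0, inH h0 -> ~ C h0 ->
    exists x u, (forall h, C h -> h x <= u) /\ u < h0 x.

Definition even_fun (f : R -> ERp) : Prop := forall x, f (- x) = f x.

Definition lsc (f : R -> ERp) : Prop :=
  forall x y, ltRE y (f x) ->
    exists delta, delta > 0 /\ forall z, Rabs (z - x) < delta -> ltRE y (f z).

Definition closed2 (A : R * R -> Prop) : Prop :=
  forall p, ~ A p -> exists eps, eps > 0 /\
    forall q, (fst q - fst p) ^ 2 + (snd q - snd p) ^ 2 < eps ^ 2 -> ~ A q.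

Definition convex2 (A : R * R -> Prop) : Prop :=
  forall p q t, A p -> A q -> 0 <= t <= 1 ->
    A (t * fst p + (1 - t) * fst q, t * snd p + (1 - t) * snd q).

Definition down_closed (A : R * R -> Prop) : Prop :=
  forall a b u v, A (a, b) -> 0 <= u -> 0 <= v -> A (a - u, b - v).

Definition param_by (C : (R -> R) -> Prop) (A : R * R -> Prop) : Prop :=
  forall h, C h <-> exists a b, A (a, b) /\ h = psi a b.

(* Main.v *)
Require Import Defs.
From Stdlib Require Import Reals Lra Lia ClassicalEpsilon Classical.
Open Scope R_scope.

Definition sq (p q : R * R) : R := (fst p - fst q) ^ 2 + (snd p - snd q) ^ 2.

Lemma glb_ex (A : R * R -> Prop) p q0 : A q0 ->
  exists m, (forall q, A q -> m <= sq q p) /\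
            (forall e, e > 0 -> exists q, A q /\ sq q p < m + e).
Proof.
  intros Hq0.
  set (E := fun y => exists q, A q /\ y = - sq q p).
  assert (HB : bound E).
  { exists 0. intros y [q [_ ->]]. unfold sq. simpl. pose proof (pow2_ge_0 (fst q - fst p)). pose proof (pow2_ge_0 (snd q - snd p)). lra. }
  assert (HE : exists y, E y) by (exists (- sq q0 p); exists q0; split; auto).
  destruct (completeness E HB HE) as [l [Hl1 Hl2]].
  exists (- l). split.
  - intros q Hq. assert (- sq q p <= l) by (apply Hl1; exists q; auto). lra.
  - intros e He. apply NNPP. intro Hn.
    assert (l <= l - e); [|lra].
    apply Hl2. intros y [q [Hq ->]].
    destruct (Rle_or_lt (- sq q p) (l - e)); auto.
    exfalso. apply Hn. exists q. split; auto. lra.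
Qed.

Lemma sq_ge0 p q : 0 <= sq p q.
Proof. unfold sq. pose proof (pow2_ge_0 (fst p - fst q)). pose proof (pow2_ge_0 (snd p - snd q)). lra. Qed.

Lemma minimizer (A : R * R -> Prop) p q0 :
  closed2 A -> convex2 A -> A q0 ->
  exists qs, A qs /\ forall q, A q -> sq qs p <= sq q p.
Proof.
  intros Hcl Hcv Hq0.
  destruct (glb_ex A p q0 Hq0) as [m [Hm1 Hm2]].
  assert (Hex : forall n : nat, exists q, A q /\ sq q p < m + / (INR n + 1)).
  { intro n. apply Hm2. apply Rinv_0_lt_compat. pose proof (pos_INR n). lra. }
  set (f := fun n => proj1_sig (constructive_indefinite_description _ (Hex n))).
  assert (Hf : forall n, A (f n) /\ sq (f n) p < m + / (INR n + 1)).
  { intro n. unfold f. destruct (constructive_indefinite_description _ (Hex n)); auto. }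
  (* parallelogram *)
  assert (Hpar : forall n k, sq (f n) (f k) <= 2 * / (INR n + 1) + 2 * / (INR k + 1)).
  { intros n k. destruct (Hf n) as [An Bn]. destruct (Hf k) as [Ak Bk].
    pose proof (Hcv (f n) (f k) (1/2) An Ak ltac:(lra)) as Hmid.
    pose proof (Hm1 _ Hmid) as Hmm. unfold sq in *; cbn [fst snd] in *.
    assert (E: (fst (f n) - fst (f k)) ^ 2 + (snd (f n) - snd (f k)) ^ 2 =
      2 * ((fst (f n) - fst p) ^ 2 + (snd (f n) - snd p) ^ 2) +
      2 * ((fst (f k) - fst p) ^ 2 + (snd (f k) - snd p) ^ 2) -
      4 * ((1 / 2 * fst (f n) + (1 - 1 / 2) * fst (f k) - fst p) ^ 2 +
           (1 / 2 * snd (f n) + (1 - 1 / 2) * snd (f k) - snd p) ^ 2)) by field.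
    rewrite E. lra. }
  assert (Hsmall : forall eps, eps > 0 -> exists N, forall n k, (n >= N)%nat -> (k >= N)%nat ->
             sq (f n) (f k) < eps).
  { intros eps He. destruct (archimed (4 / eps)) as [Ha _].
    destruct (INR_unbounded (4/eps)) as [N HN].
    exists N. intros n k Hn Hk.
    pose proof (Hpar n k).
    assert (INR N <= INR n) by (apply le_INR; lia).
    assert (INR N <= INR k) by (apply le_INR; lia).
    assert (Hi : forall j, INR N <= INR j -> / (INR j + 1) < eps / 4).
    { intros j Hj. pose proof (pos_INR N).
      assert (4 / eps < INR j + 1) by lra.
      assert (H4 : 0 < 4 / eps) by (unfold Rdiv; apply Rmult_lt_0_compat; [lra|apply Rinv_0_lt_compat; lra]).
      replace (eps / 4) with (/ (4 / eps)) by (field; lra).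
      apply Rinv_lt_contravar; [nra|lra]. }
    pose proof (Hi n ltac:(lra)). pose proof (Hi k ltac:(lra)). lra. }
  assert (Hc1 : Cauchy_crit (fun n => fst (f n))).
  { intros eps He. destruct (Hsmall (eps^2) ltac:(nra)) as [N HN]. exists N.
    intros n k Hn Hk. pose proof (HN n k Hn Hk). unfold sq in *. unfold Rdist.
    pose proof (pow2_ge_0 (snd (f n) - snd (f k))).
    apply Rsqr_incrst_0. rewrite <- Rsqr_abs. unfold Rsqr. simpl in *. lra.
    apply Rabs_pos. lra. }
  assert (Hc2 : Cauchy_crit (fun n => snd (f n))).
  { intros eps He. destruct (Hsmall (eps^2) ltac:(nra)) as [N HN]. exists N.
    intros n k Hn Hk. pose proof (HN n k Hn Hk). unfold sq in *. unfold Rdist.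
    pose proof (pow2_ge_0 (fst (f n) - fst (f k))).
    apply Rsqr_incrst_0. rewrite <- Rsqr_abs. unfold Rsqr. simpl in *. lra.
    apply Rabs_pos. lra. }
  destruct (R_complete _ Hc1) as [l1 Hl1].
  destruct (R_complete _ Hc2) as [l2 Hl2].
  assert (Hcst : forall c, Un_cv (fun _ : nat => c) c).
  { intros c eps He. exists 0%nat. intros. unfold Rdist. rewrite Rminus_diag, Rabs_R0. lra. }
  set (qs := (l1, l2)).
  assert (HAqs : A qs).
  { apply NNPP. intro Hn. destruct (Hcl qs Hn) as [eps [He Hb]].
    destruct (Hl1 (eps/2) ltac:(lra)) as [N1 HN1].
    destruct (Hl2 (eps/2) ltac:(lra)) as [N2 HN2].
    set (n := Nat.max N1 N2).
    pose proof (HN1 n ltac:(lia)). pose proof (HN2 n ltac:(lia)).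
    apply (Hb (f n)); [|apply Hf].
    unfold Rdist in *. simpl.
    assert (Hx : (fst (f n) - l1) ^ 2 < (eps/2)^2).
    { rewrite <- (pow2_abs (fst (f n) - l1)). pose proof (Rabs_pos (fst (f n) - l1)); pose proof (Rabs_pos (snd (f n) - l2)); simpl; nra. }
    assert (Hy : (snd (f n) - l2) ^ 2 < (eps/2)^2).
    { rewrite <- (pow2_abs (snd (f n) - l2)). pose proof (Rabs_pos (fst (f n) - l1)); pose proof (Rabs_pos (snd (f n) - l2)); simpl; nra. }
    nra. }
  exists qs. split; auto.
  assert (Hle : sq qs p <= m).
  { apply (@Rle_cv_lim (fun n => sq (f n) p) (fun n => m + / (INR n + 1))).
    - intro n. left. apply (proj2 (Hf n)).
    - apply Un_cv_ext with (fun n => (fst (f n) - fst p) * (fst (f n) - fst p) + (snd (f n) - snd p) * (snd (f n) - snd p)).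
      { intro n. unfold sq. ring. }
      replace (sq qs p) with ((l1 - fst p) * (l1 - fst p) + (l2 - snd p) * (l2 - snd p)) by (unfold sq, qs; simpl; ring).
      apply CV_plus; apply CV_mult; apply CV_minus; auto.
    - assert (HH : Un_cv (fun n => m + / (INR n + 1)) (m + 0)); [|rewrite Rplus_0_r in HH; exact HH]. apply CV_plus; [apply Hcst|].
      apply cv_infty_cv_0. intro M. destruct (INR_unbounded M) as [N HN]. exists N. intros n Hn.
      assert (INR N <= INR n) by (apply le_INR; lia). lra. }
  intros q Hq. pose proof (Hm1 q Hq). lra.
Qed.

Lemma separation (A : R * R -> Prop) p q0 :
  closed2 A -> convex2 A -> A q0 -> ~ A p ->
  exists w1 w2 c, (forall a b, A (a, b) -> w1 * a + w2 * b <= c) /\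
                  c < w1 * fst p + w2 * snd p.
Proof.
  intros Hcl Hcv Hq0 Hp.
  destruct (minimizer A p q0 Hcl Hcv Hq0) as [qs [Hqs Hmin]].
  destruct qs as [s1 s2]. destruct p as [p1 p2]. simpl in *.
  exists (p1 - s1), (p2 - s2), ((p1 - s1) * s1 + (p2 - s2) * s2).
  split.
  - intros a b Hab.
    set (D := (a - s1) * (s1 - p1) + (b - s2) * (s2 - p2)).
    set (E := (a - s1)^2 + (b - s2)^2).
    assert (Ht : forall t, 0 < t <= 1 -> 0 <= 2 * t * D + t^2 * E).
    { intros t Ht. pose proof (Hcv (a, b) (s1, s2) t Hab Hqs ltac:(lra)) as Hz.
      pose proof (Hmin _ Hz) as Hm. unfold sq in Hm. cbn [fst snd] in Hm.
      assert (Eq : (t * a + (1 - t) * s1 - p1) ^ 2 + (t * b + (1 - t) * s2 - p2) ^ 2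
        = (s1 - p1) ^ 2 + (s2 - p2) ^ 2 + (2 * t * D + t ^ 2 * E)) by (unfold D, E; ring).
      lra. }
    assert (HE : 0 <= E) by (unfold E; pose proof (pow2_ge_0 (a - s1)); pose proof (pow2_ge_0 (b - s2)); lra).
    assert (HD : 0 <= D).
    { destruct (Rle_or_lt 0 D) as [|HD]; auto. exfalso.
      set (t := Rmin 1 (- D / (E + 1))).
      assert (Ht1 : 0 < t).
      { unfold t. apply Rmin_glb_lt; [lra|]. unfold Rdiv. apply Rmult_lt_0_compat; [lra|apply Rinv_0_lt_compat; lra]. }
      assert (Ht2 : t <= 1) by apply Rmin_l.
      assert (Ht3 : t * (E + 1) <= - D).
      { assert (t <= - D / (E + 1)) by apply Rmin_r.
        apply Rmult_le_compat_r with (r := E + 1) in H; [|lra].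
        unfold Rdiv in H. rewrite Rmult_assoc, Rinv_l in H; lra. }
      pose proof (Ht t ltac:(lra)). nra. }
    unfold D in HD. nra.
  - assert (~ (p1 = s1 /\ p2 = s2)).
    { intros [-> ->]. auto. }
    assert (0 < (p1 - s1)^2 + (p2 - s2)^2).
    { pose proof (pow2_ge_0 (p1 - s1)); pose proof (pow2_ge_0 (p2 - s2)).
      destruct (Req_dec p1 s1).
      - destruct (Req_dec p2 s2); [tauto|].
        assert (0 < Rsqr (p2 - s2)) by (apply Rsqr_pos_lt; lra). unfold Rsqr in *. simpl. lra.
      - assert (0 < Rsqr (p1 - s1)) by (apply Rsqr_pos_lt; lra). unfold Rsqr in *. simpl. lra. }
    nra.
Qed.

Lemma sup_uniq S v v' : is_sup_ext S v -> is_sup_ext S v' -> v = v'.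
Proof.
  destruct v as [r|], v' as [r'|]; simpl; intros H1 H2; auto.
  - f_equal. destruct H1 as [U1 L1], H2 as [U2 L2].
    apply Rle_antisym; [apply L1|apply L2]; auto.
  - destruct H1 as [U _]. destruct (H2 r) as [y [Sy Hy]]. pose proof (U y Sy). lra.
  - destruct H2 as [U _]. destruct (H1 r') as [y [Sy Hy]]. pose proof (U y Sy). lra.
Qed.

Lemma sup_ext S S' v : (forall y, S y <-> S' y) -> is_sup_ext S v -> is_sup_ext S' v.
Proof.
  intros E. destruct v as [r|]; simpl.
  - intros [U L]. split.
    + intros y Hy. apply U, E, Hy.
    + intros b Hb. apply L. intros y Hy. apply Hb, E, Hy.
  - intros H M. destruct (H M) as [y [Sy Hy]]. exists y. split; auto. apply E, Sy.
Qed.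

Lemma part1 : forall f : R -> ERp, H_convex_fun f -> even_fun f /\ lsc f.
Proof.
  intros f [H [HH Hs]]. split.
  - intro x. apply (sup_uniq (fun y => exists h, H h /\ y = h x)); [|apply Hs].
    apply (sup_ext (fun y => exists h, H h /\ y = h (- x))); [|apply Hs].
    intro y. split; intros [h [Hh ->]]; exists h; split; auto;
      destruct (HH h Hh) as [a [b ->]]; unfold psi; ring.
  - intros x y Hy.
    assert (Hex : exists h, H h /\ y < h x).
    { pose proof (Hs x) as Hsx. destruct (f x) as [r|]; simpl in *.
      - destruct Hsx as [U L]. apply NNPP. intro Hn.
        assert (r <= y); [|lra]. apply L. intros z [h [Hh ->]].
        destruct (Rle_or_lt (h x) y); auto. exfalso. apply Hn. exists h. auto.
      - destruct (Hsx y) as [z [[h [Hh ->]] Hz]]. exists h. auto. }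
    destruct Hex as [h [Hh Hhx]].
    destruct (HH h Hh) as [a [b Hab]]. subst h.
    assert (Hc : continuity_pt (psi a b) x).
    { unfold psi. reg. }
    destruct (Hc (psi a b x - y) ltac:(lra)) as [d [Hd Hz]].
    exists d. split; auto. intros z Hzx.
    assert (Hyz : y < psi a b z).
    { destruct (Req_dec z x) as [->|Hne]; auto.
      assert (Rdist (psi a b z) (psi a b x) < psi a b x - y).
      { apply Hz. split; [split; [exact I|auto]|]. simpl. unfold Rdist. exact Hzx. }
      unfold Rdist in H0. apply Rabs_def2 in H0. lra. }
    pose proof (Hs z) as Hsz. destruct (f z) as [r|]; simpl in *; auto.
    destruct Hsz as [U _]. pose proof (U (psi a b z) ltac:(exists (psi a b); auto)). lra.
Qed.

Lemma psi_inj a b a' b' : psi a b = psi a' b' -> a = a' /\ b = b'.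
Proof.
  intro E. assert (E0 : psi a b 0 = psi a' b' 0) by (rewrite E; auto). assert (E1 : psi a b 1 = psi a' b' 1) by (rewrite E; auto).
  unfold psi in *. simpl in *. split; lra.
Qed.

Lemma param_A C A a b : param_by C A -> (A (a, b) <-> C (psi a b)).
Proof.
  intros P. split.
  - intro H. apply P. eauto.
  - intro H. apply P in H. destruct H as [a' [b' [H E]]].
    apply psi_inj in E. destruct E as [-> ->]. auto.
Qed.

Lemma part2 : forall (C : (R -> R) -> Prop) (A : R * R -> Prop),
      (forall h, C h -> inH h) -> H_convex_set C -> param_by C A ->
      closed2 A /\ convex2 A /\ down_closed A.
Proof.
  intros C A HC Hcv P.
  assert (Key : forall a0 b0, ~ A (a0, b0) -> exists x u,
            (forall a b, A (a, b) -> psi a b x <= u) /\ u < psi a0 b0 x).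
  { intros a0 b0 Hn. destruct (Hcv (psi a0 b0)) as [x [u [H1 H2]]].
    - exists a0, b0. auto.
    - intro Hc. apply Hn. apply (param_A C A a0 b0 P). auto.
    - exists x, u. split; auto. intros a b Hab. apply H1. apply (param_A C A a b P). auto. }
  split; [|split].
  - intros [p1 p2] Hn. destruct (Key p1 p2 Hn) as [x [u [H1 H2]]].
    unfold psi in *.
    set (d := p1 * x ^ 2 + p2 - u).
    exists (d / (x ^ 2 + 1)). pose proof (pow2_ge_0 x).
    assert (Hd : 0 < d / (x ^ 2 + 1)) by (unfold Rdiv; apply Rmult_lt_0_compat; [unfold d; lra|apply Rinv_0_lt_compat; lra]).
    split; [lra|]. intros [q1 q2] Hq HA. cbn [fst snd] in Hq.
    pose proof (H1 q1 q2 HA). set (e := d / (x ^ 2 + 1)) in *.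
    assert (He : e * (x ^ 2 + 1) = d) by (unfold e; field; lra).
    assert (S1 : (q1 - p1)^2 < e^2) by (pose proof (pow2_ge_0 (q2 - p2)); lra).
    assert (S2 : (q2 - p2)^2 < e^2) by (pose proof (pow2_ge_0 (q1 - p1)); lra).
    assert (Hq1 : Rabs (q1 - p1) < e).
    { rewrite <- (pow2_abs (q1 - p1)) in S1. pose proof (Rabs_pos (q1 - p1)). nra. }
    assert (Hq2 : Rabs (q2 - p2) < e).
    { rewrite <- (pow2_abs (q2 - p2)) in S2. pose proof (Rabs_pos (q2 - p2)). nra. }
    apply Rabs_def2 in Hq1. apply Rabs_def2 in Hq2.
    assert (q1 * x ^ 2 + q2 > p1 * x ^ 2 + p2 - d).
    { assert ((q1 - p1) * x ^ 2 >= - e * x ^ 2) by nra. nra. }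
    unfold d in *. lra.
  - intros [p1 p2] [q1 q2] t Hp Hq Ht. simpl. apply NNPP. intro Hn.
    destruct (Key _ _ Hn) as [x [u [H1 H2]]].
    pose proof (H1 _ _ Hp). pose proof (H1 _ _ Hq). unfold psi in *.
    assert (E : (t * p1 + (1 - t) * q1) * x ^ 2 + (t * p2 + (1 - t) * q2) =
              t * (p1 * x ^ 2 + p2) + (1 - t) * (q1 * x ^ 2 + q2)) by ring.
    nra.
  - intros a b s v Hab Hs Hv. apply NNPP. intro Hn.
    destruct (Key _ _ Hn) as [x [u [H1 H2]]].
    pose proof (H1 _ _ Hab). unfold psi in *. pose proof (pow2_ge_0 x). nra.
Qed.

Lemma part3 : forall (A : R * R -> Prop) (C : (R -> R) -> Prop),
      closed2 A -> convex2 A -> down_closed A ->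
      (exists x M, forall a b, A (a, b) -> psi a b x <= M) ->
      param_by C A ->
      H_convex_set C.
Proof.
  intros A C Hcl Hcv Hdc [x1 [M HM]] P h0 [a0 [b0 ->]] Hn.
  assert (Hna : ~ A (a0, b0)) by (intro H; apply Hn, (param_A C A a0 b0 P), H).
  assert (Goal : exists x u, (forall a b, A (a, b) -> psi a b x <= u) /\ u < psi a0 b0 x).
  { destruct (classic (exists q, A q)) as [[q0 Hq0]|Hemp].
    2:{ exists 0, (psi a0 b0 0 - 1). split; [|lra]. intros a b Hab. exfalso. eauto. }
    destruct (separation A (a0, b0) q0 Hcl Hcv Hq0 Hna) as [w1 [w2 [c [Hs Hc]]]].
    simpl in Hc. destruct q0 as [qa qb].
    assert (Hw1 : 0 <= w1).
    { destruct (Rle_or_lt 0 w1) as [|Hlt]; auto. exfalso.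
      set (u := (c - w1 * qa - w2 * qb) / (- w1) + 1).
      assert (Hu : 0 <= u).
      { pose proof (Hs qa qb Hq0). unfold u. unfold Rdiv.
        assert (0 <= (c - w1 * qa - w2 * qb) * / - w1).
        { apply Rmult_le_pos; [lra|]. left. apply Rinv_0_lt_compat. lra. } lra. }
      pose proof (Hs _ _ (Hdc qa qb u 0 Hq0 Hu (Rle_refl 0))).
      assert (E : w1 * u = - (c - w1 * qa - w2 * qb) + w1) by (unfold u; field; lra).
      nra. }
    assert (Hw2 : 0 <= w2).
    { destruct (Rle_or_lt 0 w2) as [|Hlt]; auto. exfalso.
      set (u := (c - w1 * qa - w2 * qb) / (- w2) + 1).
      assert (Hu : 0 <= u).
      { pose proof (Hs qa qb Hq0). unfold u. unfold Rdiv.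
        assert (0 <= (c - w1 * qa - w2 * qb) * / - w2).
        { apply Rmult_le_pos; [lra|]. left. apply Rinv_0_lt_compat. lra. } lra. }
      pose proof (Hs _ _ (Hdc qa qb 0 u Hq0 (Rle_refl 0) Hu)).
      assert (E : w2 * u = - (c - w1 * qa - w2 * qb) + w2) by (unfold u; field; lra).
      nra. }
    destruct (Rle_lt_or_eq_dec 0 w2 Hw2) as [Hw2p|Hw20].
    - exists (sqrt (w1 / w2)), (c / w2).
      assert (Hs2 : sqrt (w1 / w2) ^ 2 = w1 / w2).
      { apply pow2_sqrt. unfold Rdiv. apply Rmult_le_pos; [lra|left; apply Rinv_0_lt_compat; lra]. }
      unfold psi. rewrite Hs2. split.
      + intros a b Hab. pose proof (Hs a b Hab).
        apply Rmult_le_reg_r with w2; auto.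
        replace ((a * (w1 / w2) + b) * w2) with (w1 * a + w2 * b) by (field; lra).
        replace (c / w2 * w2) with c by (field; lra). lra.
      + apply Rmult_lt_reg_r with w2; auto.
        replace ((a0 * (w1 / w2) + b0) * w2) with (w1 * a0 + w2 * b0) by (field; lra).
        replace (c / w2 * w2) with c by (field; lra). lra.
    - subst w2.
      assert (Hw1p : 0 < w1).
      { pose proof (Hs qa qb Hq0). destruct Hw1 as [|<-]; auto. lra. }
      set (c' := c / w1).
      assert (Hc' : c' < a0) by (unfold c'; apply Rmult_lt_reg_r with w1; auto; unfold Rdiv; rewrite Rmult_assoc, Rinv_l; lra).
      assert (HA : forall a b, A (a, b) -> a <= c').
      { intros a b Hab. pose proof (Hs a b Hab). unfold c'. apply Rmult_le_reg_r with w1; auto.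
        unfold Rdiv; rewrite Rmult_assoc, Rinv_l; lra. }
      set (K := Rmax 0 ((M - a0 * x1 ^ 2 - b0) / (a0 - c')) + 1).
      assert (HK0 : 0 <= K) by (unfold K; pose proof (Rmax_l 0 ((M - a0 * x1 ^ 2 - b0) / (a0 - c'))); lra).
      assert (HK1 : M - a0 * x1 ^ 2 - b0 < K * (a0 - c')).
      { assert (HH : (M - a0 * x1 ^ 2 - b0) / (a0 - c') < K)
          by (unfold K; pose proof (Rmax_r 0 ((M - a0 * x1 ^ 2 - b0) / (a0 - c'))); lra).
        apply Rmult_lt_compat_r with (r := a0 - c') in HH; [|lra].
        unfold Rdiv in HH. rewrite Rmult_assoc, Rinv_l in HH; lra. }
      pose proof (pow2_ge_0 x1).
      exists (sqrt (x1 ^ 2 + K)), (M + c' * K).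
      assert (Hs2 : sqrt (x1 ^ 2 + K) ^ 2 = x1 ^ 2 + K).
      { apply pow2_sqrt. lra. }
      unfold psi. rewrite Hs2. split.
      + intros a b Hab. pose proof (HM a b Hab). pose proof (HA a b Hab). unfold psi in *. nra.
      + nra. }
  destruct Goal as [x [u [G1 G2]]]. exists x, u. split; auto.
  intros h Hh. apply P in Hh. destruct Hh as [a [b [Hab ->]]]. auto.
Qed.

Theorem mainTheorem13 :
  (forall f : R -> ERp, H_convex_fun f -> even_fun f /\ lsc f) /\
  (forall (C : (R -> R) -> Prop) (A : R * R -> Prop),
      (forall h, C h -> inH h) -> H_convex_set C -> param_by C A ->
      closed2 A /\ convex2 A /\ down_closed A) /\
  (forall (A : R * R -> Prop) (C : (R -> R) -> Prop),
      closed2 A -> convex2 A -> down_closed A ->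
      (exists x M, forall a b, A (a, b) -> psi a b x <= M) ->
      param_by C A ->
      H_convex_set C).
Proof.
  split; [exact part1|split; [exact part2|exact part3]].
Qed.
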